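(* Consider the problem and algorithm AC2CD described in the context. At every outer iteration $k$, \[ f(x^k)-f(x^{k+1})\ge\frac{\gamma}{A_u}\,\|x^{k+1}-x^k\|_{\langle j(k)\rangle}^2. \]
   Context: Problem: minimize $f(x)$ subject to $e^T x = b$ and $l_i \le x_i \le u_i$ ($i=1,\dots,n$), where $n\ge 2$, $e$ is the all-ones vector, $b\in\mathbb{R}$, $l_i\in\mathbb{R}\cup\{-\infty\}$, $u_i\in\mathbb{R}\cup\{+\infty\}$, $l_i<u_i$, and $f:\mathbb{R}^n\to\mathbb{R}$ is continuously differentiable with $\nabla f$ Lipschitz continuous on $\mathbb{R}^n$. $\mathcal F$ is the feasible set, $e_i$ the $i$th unit vector. $\|x\|_{\langle j\rangle}=\sqrt{\sum_{i\ne j}x_i^2}$. For $x\in\mathcal F$, $D_h(x)=\min\{x_h-l_h,u_h-x_h\}$. Algorithm AC2CD with parameters $\tau\in(0,1]$, $\gamma,\delta\in(0,1)$, $0<A_l\le A_u<\infty$ and starting point $x^0\in\mathcal F$: for $k=0,1,2,\dots$: let $D^k=\max_h D_h(x^k)$; choose $j(k)$ with $D_{j(k)}(x^k)\ge\tau D^k$; choose a permutation $(p^k_1,\dots,p^k_n)$ of $\{1,\dots,n\}$; set $z^{k,1}=x^k$; for $i=1,\dots,n$ (inner iteration $(k,i)$): $g^{k,i}=\nabla_{j(k)}f(z^{k,i})-\nabla_{p^k_i}f(z^{k,i})$, $d^{k,i}=g^{k,i}(e_{p^k_i}-e_{j(k)})$; $\bar\alpha^{k,i}=\min\{u_{p^k_i}-z^{k,i}_{p^k_i},z^{k,i}_{j(k)}-l_{j(k)}\}/g^{k,i}$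 if $g^{k,i}>0$, $=\min\{z^{k,i}_{p^k_i}-l_{p^k_i},u_{j(k)}-z^{k,i}_{j(k)}\}/|g^{k,i}|$ if $g^{k,i}<0$, $=0$ if $g^{k,i}=0$; choose $A^{k,i}\in[A_l,A_u]$, set $\Delta^{k,i}=\min\{\bar\alpha^{k,i},A^{k,i}\}$; starting from $\alpha=\Delta^{k,i}$, while $f(z^{k,i}+\alpha d^{k,i})>f(z^{k,i})+\gamma\alpha\nabla f(z^{k,i})^Td^{k,i}$ replace $\alpha$ by $\delta\alpha$; $\alpha^{k,i}$ is the final $\alpha$ and $z^{k,i+1}=z^{k,i}+\alpha^{k,i}d^{k,i}$. Then $x^{k+1}=z^{k,n+1}$. Standing assumptions: $\mathcal L_0=\{x\in\mathcal F: f(x)\le f(x^0)\}$ is nonempty and compact, and every $x\in\mathcal L_0$ has some index $i$ with $l_i<x_i<u_i$. *)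

(* Defs.v *)
(* R : realType, vectors in R^n are row vectors 'rV[R]_n,
   coordinates are indexed by 'I_n (i.e. 0..n-1 instead of 1..n). *)
From HB Require Import structures.
From mathcomp Require Import all_boot all_order all_algebra perm.
From mathcomp Require Import all_classical all_reals all_analysis.
Set Implicit Arguments. Unset Strict Implicit. Unset Printing Implicit Defensive.
Import Order.TTheory GRing.Theory Num.Theory.
Import numFieldNormedType.Exports.
Local Open Scope classical_set_scope.
Local Open Scope ring_scope.

Section AC2CD.
Variables (R : realType) (n : nat).
Implicit Types (f : 'rV[R]_n -> R) (x z d : 'rV[R]_n) (l u : 'I_n -> \bar R).

Definition unitv (i : 'I_n) : 'rV[R]_n := delta_mx 0 i.

Definition partial f x (i : 'I_n) : R := 'D_(unitv i) f x.

Definition grad_dot f x d : R := \sum_(i < n) partial f x i * d 0 i.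

Definition norm_except (j : 'I_n) (v : 'rV[R]_n) : R :=
  Num.sqrt (\sum_(i < n | i != j) (v 0 i) ^+ 2).

Definition feasible l u (b : R) x : Prop :=
  \sum_(i < n) x 0 i = b /\ forall i, (l i <= (x 0 i)%:E)%E /\ ((x 0 i)%:E <= u i)%E.

Definition Dh l u x (h : 'I_n) : \bar R :=
  Order.min ((x 0 h)%:E - l h)%E (u h - (x 0 h)%:E)%E.

Definition Dmax l u x : \bar R := \big[Order.max/-oo%E]_(h < n) Dh l u x h.

Definition gcoef f z (j p : 'I_n) : R := partial f z j - partial f z p.

Definition dir (j p : 'I_n) (g : R) : 'rV[R]_n := g *: (unitv p - unitv j).

Definition alphabar l u z (j p : 'I_n) (g : R) : \bar R :=
  if 0 < g then
    (Order.min (u p - (z 0 p)%:E) ((z 0 j)%:E - l j) * (g^-1)%:E)%E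
  else if g < 0 then
    (Order.min ((z 0 p)%:E - l p) (u j - (z 0 j)%:E) * ((`|g|)^-1)%:E)%E
  else 0%E.

(* Delta^{k,i} = min{ \bar alpha, A } (finite since A is finite) *)
Definition Delta l u z j p g (A : R) : R :=
  fine (Order.min (alphabar l u z j p g) A%:E).

(* Armijo acceptance test (negation of the while-loop condition) *)
Definition armijo f (gamma : R) z d (a : R) : Prop :=
  f (z + a *: d) <= f z + gamma * a * grad_dot f z d.

(* One inner iteration (k,i): z' = z^{k,i+1} is obtained from z = z^{k,i} with
   working index j, chosen index p, A = A^{k,i} and accepted step a = alpha^{k,i}. *)
Definition inner_step f l u (gamma delta : R) (j p : 'I_n) (A : R)
    z (a : R) z' : Prop :=
  let g := gcoef f z j p in
  let d := dir j p g in
  let D := Delta l u z j p g A in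
  (exists m : nat,
      a = delta ^+ m * D /\ armijo f gamma z d (delta ^+ m * D) /\
      forall m' : nat, (m' < m)%N -> ~ armijo f gamma z d (delta ^+ m' * D))
  /\ z' = z + a *: d.

(* A run of AC2CD: outer iterates x, working indices j, permutations p,
   inner iterates z k i (i = 0..n, shifted by one w.r.t. the paper),
   steps alpha k i and trial parameters A k i. *)
Definition AC2CD_run f l u (b tau gamma delta Al Au : R)
    (x : nat -> 'rV[R]_n) (j : nat -> 'I_n) (p : nat -> 'S_n)
    (z : nat -> nat -> 'rV[R]_n) (alpha A : nat -> 'I_n -> R) : Prop :=
  feasible l u b (x 0%N) /\
  forall k : nat,
    (Dh l u (x k) (j k) >= tau%:E * Dmax l u (x k))%E /\
    z k 0%N = x k /\ z k n = x k.+1 /\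
    forall i : 'I_n,
      Al <= A k i <= Au /\
      inner_step f l u gamma delta (j k) (p k i) (A k i)
                 (z k i) (alpha k i) (z k i.+1).

End AC2CD.

(* Main.v *)
Require Import Defs.
From HB Require Import structures.
From mathcomp Require Import all_boot all_order all_algebra perm.
From mathcomp Require Import all_classical all_reals all_analysis.
From mathcomp Require Import lra ring.
Import Order.TTheory GRing.Theory Num.Theory.
Import numFieldNormedType.Exports.
Local Open Scope classical_set_scope.
Local Open Scope ring_scope.


Lemma eH1 {R : realType} (U : \bar R) (zp c : R) : (c%:E <= U - zp%:E)%E -> ((zp + c)%:E <= U)%E.
Proof. case: U => [r| |] //=; rewrite ?lee_fin => h; rewrite ?leey //; lra. Qed.

Lemma eH2 {R : realType} (L : \bar R) (zj c : R) : (c%:E <= zj%:E - L)%E -> (L <= (zj - c)%:E)%E.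
Proof. case: L => [r| |] //=; rewrite ?lee_fin => h; rewrite ?leNye //; lra. Qed.

Lemma eH3 {R : realType} (E : \bar R) (x y : R) : (E <= x%:E)%E -> x <= y -> (E <= y%:E)%E.
Proof. by move=> h xy; apply: le_trans h _; rewrite lee_fin. Qed.

Lemma eH4 {R : realType} (E : \bar R) (x y : R) : (x%:E <= E)%E -> y <= x -> (y%:E <= E)%E.
Proof. by move=> h xy; apply: le_trans h; rewrite lee_fin. Qed.

Lemma scale_bound {R : realType} (M : \bar R) (G a D : R) : 0 < G -> 0 <= a <= D ->
  (D%:E <= M * (G^-1)%:E)%E -> ((a * G)%:E <= M)%E.
Proof.
move=> G0 /andP[a0 aD]; case: M => [r| |] /=.
- rewrite -EFinM !lee_fin ler_pdivlMr // => h.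
  apply: le_trans h; by rewrite ler_wpM2r // ltW.
- by rewrite leey.
- rewrite gt0_mulNye ?lte_fin ?invr_gt0 //.
Qed.

Section Step.
Variables (R : realType) (n : nat) (f : 'rV[R]_n -> R) (l u : 'I_n -> \bar R).

Definition bnd (z : 'rV[R]_n) := forall i, (l i <= (z 0 i)%:E)%E /\ ((z 0 i)%:E <= u i)%E.

Lemma dir_entry (j p q : 'I_n) (g : R) : dir j p g 0 q = g * ((q == p)%:R - (q == j)%:R).
Proof. by rewrite /dir /unitv !mxE. Qed.

Lemma grad_unit z (p : 'I_n) : grad_dot f z (unitv R p) = partial f z p.
Proof.
rewrite /grad_dot (bigD1 p) //= big1 => [|i /negbTE ip]; last by rewrite /unitv mxE ip mulr0.
by rewrite /unitv mxE !eqxx mulr1 addr0.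
Qed.

Lemma grad_dir z (j p : 'I_n) : grad_dot f z (dir j p (gcoef f z j p)) = - (gcoef f z j p) ^+ 2.
Proof.
have lin : forall (c : R) d1 d2, grad_dot f z (c *: (d1 - d2)) = c * (grad_dot f z d1 - grad_dot f z d2).
  move=> c d1 d2; rewrite /grad_dot mulrBr !mulr_sumr -sumrB; apply: eq_bigr => i _.
  rewrite !mxE; ring.
by rewrite /dir lin !grad_unit /gcoef; ring.
Qed.

Lemma step_props (gamma delta : R) (j p : 'I_n) (A : R) z a z' :
  bnd z -> 0 < A -> 0 <= delta <= 1 ->
  inner_step f l u gamma delta j p A z a z' ->
  [/\ bnd z', 0 <= a <= A,
      f z - f z' >= gamma * a * (gcoef f z j p) ^+ 2 &
      z' = z + (a * gcoef f z j p) *: (unitv R p - unitv R j)].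
Proof.
move=> bz A0 /andP[d0 d1] [[m [ea [arm _]]] ez'].
set g := gcoef f z j p.
have zf : forall i, ((z 0 i)%:E - l i >= 0)%E /\ (u i - (z 0 i)%:E >= 0)%E.
  by move=> i; have [h1 h2] := bz i; rewrite !sube_ge0 ?fin_numE ?h1 ?h2 ?orbT.
have ab0 : (0 <= alphabar l u z j p g)%E.
  rewrite /alphabar; case: ifP => g0; last case: ifP => g1.
  - apply: mule_ge0; last by rewrite lee_fin invr_ge0 ltW.
    by rewrite le_min (zf p).2 (zf j).1.
  - apply: mule_ge0; last by rewrite lee_fin invr_ge0 normr_ge0.
    by rewrite le_min (zf p).1 (zf j).2.
  - by [].
set D := Delta l u z j p g A.
have [eD D0 DA Dab] : [/\ Order.min (alphabar l u z j p g) A%:E = D%:E, 0 <= D, D <= A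
      & (D%:E <= alphabar l u z j p g)%E].
  have m0 : (0 <= Order.min (alphabar l u z j p g) A%:E)%E by rewrite le_min ab0 lee_fin ltW.
  have mA : (Order.min (alphabar l u z j p g) A%:E <= A%:E)%E by rewrite ge_min lexx orbT.
  have mfin : Order.min (alphabar l u z j p g) A%:E \is a fin_num.
    by move: m0 mA; case: (Order.min _ _).
  have eD : Order.min (alphabar l u z j p g) A%:E = D%:E by rewrite /D /Delta fineK.
  split => //; rewrite -?lee_fin -?eD //.
  by rewrite ge_min lexx.
have dm0 : 0 <= delta ^+ m by rewrite exprn_ge0.
have dm1 : delta ^+ m <= 1 by rewrite exprn_ile1.
have a0 : 0 <= a by rewrite ea mulr_ge0.
have aD : a <= D by rewrite ea ler_piMl.
have ez2 : z' = z + (a * g) *: (unitv R p - unitv R j) by rewrite ez' /dir scalerA.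
split => //.
- have [[P1 P2] [P3 P4]] : ((l p <= (z 0 p + a*g)%:E) /\ ((z 0 p + a*g)%:E <= u p))%E /\
      ((l j <= (z 0 j - a*g)%:E) /\ ((z 0 j - a*g)%:E <= u j))%E.
    move: Dab; rewrite /alphabar; case: ifP => g0; [|case: ifP => g1].
    + move/(scale_bound _ _ _ _ g0 (introT andP (conj a0 aD))); rewrite le_min => /andP[h1 h2].
      have ag0 : 0 <= a * g by rewrite mulr_ge0 // ltW.
      split; split.
      * by apply: eH3 (bz p).1 _; lra.
      * exact: eH1.
      * exact: eH2.
      * by apply: eH4 (bz j).2 _; lra.
    + have gn : 0 < `|g| by rewrite normr_gt0 lt_eqF.
      move/(scale_bound _ _ _ _ gn (introT andP (conj a0 aD))); rewrite le_min => /andP[h1 h2].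
      have e1 : a * g = - (a * `|g|) by rewrite ltr0_norm // mulrN opprK.
      have ag0 : 0 <= a * `|g| by rewrite mulr_ge0.
      rewrite e1; split; split.
      * exact: eH2.
      * by apply: eH4 (bz p).2 _; lra.
      * by apply: eH3 (bz j).1 _; lra.
      * rewrite opprK; exact: eH1.
    + have -> : g = 0 by move: g0 g1; rewrite !ltNge => /negbFE ? /negbFE ?; apply/eqP; rewrite eq_le; apply/andP.
      rewrite mulr0 addr0 subr0; split; [exact: bz p | exact: bz j].
  move=> q; rewrite ez2 /unitv !mxE /=.
  case: (eqVneq q p) => [qp|qp]; case: (eqVneq q j) => [qj|qj].
  + by rewrite /= subrr mulr0 addr0; exact: bz q.
  + by rewrite /= mulr1n mulr0n subr0 mulr1 qp.
  + by rewrite /= mulr1n mulr0n sub0r mulrN1 qj.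
  + by rewrite /= mulr0n subrr mulr0 addr0; exact: bz q.
- by rewrite a0 (le_trans aD DA).
- move: arm; rewrite /armijo -ea -ez' grad_dir -/g => h.
  lra.
Qed.
End Step.
Arguments bnd {R n}.
Arguments step_props {R n f l u gamma delta j p A z a z'}.

Lemma tel {R : realType} (n : nat) (F : nat -> R) : \sum_(i < n) (F i - F i.+1) = F 0%N - F n.
Proof.
rewrite -(big_mkord xpredT (fun i => F i - F i.+1)).
rewrite (eq_bigr (fun i => (- F i.+1) - (- F i))); last by move=> i _; rewrite opprK addrC.
by rewrite telescope_sumr // opprK addrC.
Qed.

Lemma term_bound {R : realType} (gamma Au a g : R) : 0 < gamma -> 0 < Au -> 0 <= a <= Au ->
  gamma / Au * (a * g) ^+ 2 <= gamma * a * g ^+ 2.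
Proof.
move=> g0 A0 /andP[a0 aA].
set w := gamma / Au.
have e : gamma = w * Au by rewrite /w divfK // gt_eqF.
have w0 : 0 <= w by rewrite /w divr_ge0 // ltW.
have h := mulr_ge0 (mulr_ge0 w0 a0) (mulr_ge0 (sqr_ge0 g) (ltac:(by rewrite subr_ge0) : 0 <= Au - a)).
rewrite e; nra.
Qed.
Theorem proposition3 (R : realType) (n : nat) (f : 'rV[R]_n -> R)
    (b : R) (l u : 'I_n -> \bar R)
    (tau gamma delta Al Au : R)
    (x : nat -> 'rV[R]_n) (j : nat -> 'I_n) (p : nat -> 'S_n)
    (z : nat -> nat -> 'rV[R]_n) (alpha A : nat -> 'I_n -> R) :
  (1 < n)%N ->
  (* bounds: l_i in R u {-oo}, u_i in R u {+oo}, l_i < u_i *)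
  (forall i, l i != +oo%E) -> (forall i, u i != -oo%E) ->
  (forall i, (l i < u i)%E) ->
  (* f is continuously differentiable with Lipschitz gradient *)
  (forall y, differentiable f y) ->
  (forall i, continuous (fun y => partial f y i)) ->
  (exists L : R, forall y y' i,
      `|partial f y i - partial f y' i| <= L * `|y - y'|) ->
  (* parameters *)
  0 < tau <= 1 -> 0 < gamma < 1 -> 0 < delta < 1 -> 0 < Al <= Au ->
  (* standing assumptions on the level set L_0 *)
  let L0 := [set y | feasible l u b y /\ f y <= f (x 0%N)] in
  L0 !=set0 -> compact L0 ->
  (forall y, L0 y -> exists i, (l i < (y 0 i)%:E < u i)%E) ->
  (* (x, j, p, z, alpha, A) is a run of AC2CD *)
  AC2CD_run f l u b tau gamma delta Al Au x j p z alpha A ->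
  forall k : nat,
    f (x k) - f (x k.+1) >= gamma / Au * norm_except (j k) (x k.+1 - x k) ^+ 2.
Proof.
move=> n1 _ _ _ _ _ _ _ /andP[gam0 _] /andP[del0 del1] /andP[Al0 AlAu] L0 _ _ _ [feas0 hrun] k.
have dl : 0 <= delta <= 1 by rewrite ltW // ltW.
have stepk : forall k (i : 'I_n), bnd l u (z k i) ->
    [/\ bnd l u (z k i.+1), 0 <= alpha k i <= Au,
      f (z k i) - f (z k i.+1) >= gamma * alpha k i * (gcoef f (z k i) (j k) (p k i)) ^+ 2 &
      z k i.+1 = z k i + (alpha k i * gcoef f (z k i) (j k) (p k i)) *:
                 (unitv R (p k i) - unitv R (j k))].
  move=> k' i bz; have [/andP[h1 h2] hs] := (hrun k').2.2.2 i.
  have [? /andP[a0 aA] ? ?] := step_props bz (lt_le_trans Al0 h1) dl hs.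
  by split=> //; rewrite a0 (le_trans aA h2).
have inner : forall k, bnd l u (x k) -> forall i, (i <= n)%N -> bnd l u (z k i).
  move=> k' bk; elim => [|i IHi] hi; first by rewrite (hrun k').2.1.
  have hi' : (i < n)%N by [].
  by have [] := stepk k' (Ordinal hi') (IHi (ltnW hi')).
have bx : forall k, bnd l u (x k).
  elim => [|k' IH]; first by move=> i; exact: feas0.2 i.
  by rewrite -(hrun k').2.2.1; apply: inner.
set jk := j k.
pose c (i : 'I_n) := alpha k i * gcoef f (z k i) jk (p k i).
have hs := fun i : 'I_n => stepk k i (inner k (bx k) i (ltnW (ltn_ord i))).
have Au0 : 0 < Au by exact: lt_le_trans Al0 AlAu.
have dec : f (x k) - f (x k.+1) = \sum_(i < n) (f (z k i) - f (z k i.+1)).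
  by rewrite (tel _ (fun i => f (z k i))) (hrun k).2.1 (hrun k).2.2.1.
have coord : forall q, (x k.+1 - x k) 0 q = \sum_(i < n) c i * ((q == p k i)%:R - (q == jk)%:R).
  move=> q; rewrite -(hrun k).2.1 -(hrun k).2.2.1 mxE.
  rewrite mxE. have -> : z k n 0 q - z k 0%N 0 q = \sum_(i<n) (z k i.+1 0 q - z k i 0 q).
    by rewrite -opprB -(tel _ (fun i => z k i 0 q)) -sumrN; apply: eq_bigr => i _; rewrite opprB.
  apply: eq_bigr => i _; have [_ _ _ ->] := hs i; rewrite /unitv /c !mxE /=.
  by rewrite addrAC subrr add0r.
have cpi : forall i0, p k i0 != jk -> (x k.+1 - x k) 0 (p k i0) = c i0.
  move=> i0 h; rewrite coord (bigD1 i0) //= eqxx. move/negbTE: (h) => hf. rewrite hf big1 => [|i ii0].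
    by rewrite mulr1n mulr0n subr0 mulr1 addr0.
  by rewrite (inj_eq perm_inj) eq_sym (negbTE ii0) mulr0n subrr mulr0.
have S_le : \sum_(q < n | q != jk) ((x k.+1 - x k) 0 q) ^+ 2 <= \sum_(i < n) c i ^+ 2.
  rewrite (reindex_inj (@perm_inj _ (p k))) /=.
  rewrite [X in _ <= X](bigID (fun i => p k i != jk)) /=.
  rewrite (eq_bigr (fun i => c i ^+ 2)) => [|i h]; last by rewrite cpi.
  by rewrite lerDl sumr_ge0 // => i _; exact: sqr_ge0.
rewrite dec /norm_except sqr_sqrtr; last by apply: sumr_ge0 => i _; exact: sqr_ge0.
apply: le_trans (_ : gamma / Au * \sum_(i<n) c i ^+ 2 <= _).
  by rewrite ler_wpM2l // divr_ge0 // ltW.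
rewrite mulr_sumr; apply: ler_sum => i _; have [_ ha hd _] := hs i; apply: le_trans hd.
exact: term_bound.
Qed.
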